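(* Let $N$ be a positive integer, $a,b,c\in\mathbb{R}$ with $a\neq0$, $W=[w_{ij}]\in\mathbb{R}^{N\times N}$ with $w_{ii}=0$ for all $i$, $\Delta=\mathrm{diag}(\delta_1,\dots,\delta_N)$ with $\delta_i\in\{0,1\}$, and $h>0$. Put $\Phi_s=e^{ah}I_N+\frac{c}{a}(e^{ah}-1)W$ and $\Psi_s=\frac{b}{a}(e^{ah}-1)\Delta$. If the continuous-time system $\dot X(t)=(aI_N+cW)X(t)+b\Delta U(t)$ is controllable, then the discrete-time system $X(k+1)=\Phi_sX(k)+\Psi_sU(k)$ is controllable.
   Context: The discrete system is the periodic sampling (period $h$, zero-order hold) of the continuous one. The continuous-time system is controllable in the usual sense (equivalently $\mathrm{rank}[sI_N-(aI_N+cW),\ b\Delta]=N$ for all $s\in\mathbb{C}$). The discrete-time system is called controllable if every initial state can be steered to the origin in finitely many steps. *)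

(* Defs.v *)
From HB Require Import structures.
From mathcomp Require Import all_boot all_order all_algebra.
From mathcomp Require Import all_classical all_reals all_analysis.
Set Implicit Arguments. Unset Strict Implicit. Unset Printing Implicit Defensive.
Import Order.TTheory GRing.Theory Num.Theory.
Local Open Scope ring_scope.

Definition ctrb_mx (R : comNzRingType) (N m : nat) (A : 'M[R]_N) (B : 'M[R]_(N, m)) :=
  \mxrow_(i < N) (A ^+ i *m B).

(* Continuous-time system x' = A x + B u is controllable (usual sense,
   Kalman rank criterion): rank [B, AB, ..., A^(N-1)B] = N. *)
Definition cont_controllable (R : fieldType) (N m : nat) (A : 'M[R]_N) (B : 'M[R]_(N, m)) : Prop :=
  \rank (ctrb_mx A B) = N.

Fixpoint disc_traj (R : nzRingType) (N m : nat) (Phi : 'M[R]_N) (Psi : 'M[R]_(N, m))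
  (x0 : 'cV[R]_N) (u : nat -> 'cV[R]_m) (k : nat) : 'cV[R]_N :=
  match k with
  | 0 => x0
  | k'.+1 => Phi *m disc_traj Phi Psi x0 u k' + Psi *m u k'
  end.

Definition disc_controllable (R : nzRingType) (N m : nat) (Phi : 'M[R]_N) (Psi : 'M[R]_(N, m)) : Prop :=
  forall x0 : 'cV[R]_N, exists (k : nat) (u : nat -> 'cV[R]_m), disc_traj Phi Psi x0 u k = 0.

Definition Delta_mx {R : nzRingType} (N : nat) (delta : 'I_N -> bool) : 'M[R]_N :=
  diag_mx (\row_i (delta i)%:R).

(* Main.v *)
Require Import Defs.
From HB Require Import structures.
From mathcomp Require Import all_boot all_order all_algebra.
From mathcomp Require Import all_classical all_reals all_analysis.
From mathcomp Require Import zify ring.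
Set Implicit Arguments. Unset Strict Implicit. Unset Printing Implicit Defensive.
Import Order.TTheory GRing.Theory Num.Theory.
Local Open Scope ring_scope.

Section S.
Variables (F : fieldType) (N m : nat) (Phi : 'M[F]_N) (Psi : 'M[F]_(N,m)).

Definition inC (X : 'M[F]_(N,m)) :=
  exists T : 'M[F]_((\sum_(i < N) m)%N, m), X = ctrb_mx Phi Psi *m T.

Lemma inC0 : inC 0.
Proof. by exists 0; rewrite mulmx0. Qed.
Lemma inCD X Y : inC X -> inC Y -> inC (X + Y).
Proof. by move=> [T ->] [U ->]; exists (T + U); rewrite mulmxDr. Qed.
Lemma inCN X : inC X -> inC (- X).
Proof. by move=> [T ->]; exists (- T); rewrite mulmxN. Qed.
Lemma inCZ k X : inC X -> inC (k *: X).
Proof. by move=> [T ->]; exists (k *: T); rewrite scalemxAr. Qed.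
Lemma inCMn n X : inC X -> inC (X *+ n).
Proof. move=> hX; elim: n => [|n IH]; first by rewrite mulr0n; exact: inC0.
by rewrite mulrS; apply: inCD. Qed.
Lemma inC_sum (I : finType) (G : I -> 'M[F]_(N,m)) :
  (forall i, inC (G i)) -> inC (\sum_i G i).
Proof. move=> h; apply: (big_ind inC) => //; [exact: inC0|exact: inCD]. Qed.

Lemma inC_pow k : (k < N)%N -> inC (Phi ^+ k *m Psi).
Proof.
move=> hk; exists (\mxcol_(j < N) ((j == Ordinal hk)%:R *: (1%:M : 'M[F]_m))).
rewrite /ctrb_mx mul_mxrow_mxcol (bigD1 (Ordinal hk)) //= eqxx scale1r mulmx1.
rewrite big1 ?addr0 // => j /negPf ->; by rewrite scale0r mulmx0.
Qed.

Lemma inC_sign j p : inC (Phi ^+ p *m Psi) -> inC (((-1) ^+ j * Phi ^+ p) *m Psi).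
Proof.
move=> h; elim: j => [|j IH]; first by rewrite expr0 mul1r.
by rewrite exprS mulN1r mulNr mulNmx; apply: inCN.
Qed.

End S.

Lemma mulmxMnl (F : fieldType) p q r (X : 'M[F]_(p,q)) (Y : 'M[F]_(q,r)) n :
  (X *+ n) *m Y = (X *m Y) *+ n.
Proof. elim: n => [|n IH]; first by rewrite !mulr0n mul0mx. by rewrite !mulrS mulmxDl IH. Qed.

Lemma key (F : fieldType) (n m : nat) (A : 'M[F]_n.+1) (B : 'M[F]_(n.+1, m)) (k : F) :
  k != 0 -> forall i, (i < n.+1)%N -> inC (1%:M + k *: A) (k *: B) (A ^+ i *m B).
Proof.
move=> k0 i hi.
set Phi := 1%:M + k *: A.
have hA : A = k^-1 *: (Phi - 1).
  by rewrite /Phi addrC addKr scalerA mulVf // scale1r.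
have hB : B = k^-1 *: (k *: B) by rewrite scalerA mulVf // scale1r.
rewrite hA exprZn [X in _ *m X]hB -scalemxAl -scalemxAr; apply: inCZ; apply: inCZ.
rewrite exprBn_comm; last exact: commr1.
rewrite mulmx_suml; apply: inC_sum => j.
rewrite mulmxMnl; apply: inCMn; rewrite expr1n mulr1.
apply: inC_sign; apply: inC_pow.
exact: leq_ltn_trans (leq_subr _ _) hi.
Qed.

Lemma ctrb_sub (F : fieldType) (n m : nat) (A : 'M[F]_n.+1) (B : 'M[F]_(n.+1, m)) (k : F) :
  k != 0 -> exists T, ctrb_mx A B = ctrb_mx (1%:M + k *: A) (k *: B) *m T.
Proof.
move=> k0.
have /fin_all_exists [f hf] : forall i : 'I_n.+1, exists T,
   A ^+ i *m B = ctrb_mx (1%:M + k *: A) (k *: B) *m T.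
  by move=> i; apply: key => //; exact: ltn_ord.
exists (\mxrow_i f i); rewrite mul_mxrow /ctrb_mx; apply: eq_mxrow => i; exact: hf.
Qed.

Lemma traj_formula (F : fieldType) (N m : nat) (Phi : 'M[F]_N) (Psi : 'M[F]_(N, m)) x0 u k :
  disc_traj Phi Psi x0 u k =
  Phi ^+ k *m x0 + \sum_(j < k) Phi ^+ j *m Psi *m u (k.-1 - j)%N.
Proof.
elim: k => [|k IH]; first by rewrite big_ord0 expr0 mul1mx addr0.
rewrite /= IH big_ord_recl /= subn0 expr0 mul1mx mulmxDr mulmxA [Phi ^+ k.+1]exprS -mulmxE.
rewrite mulmx_sumr -addrA; congr (_ + _); rewrite addrC; congr (_ + _).
apply: eq_bigr => j _; rewrite !mulmxA /bump /= exprS -mulmxE; congr (_ *m u _).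
by lia.
Qed.

Lemma disc_of_rowfree (F : fieldType) (n m : nat) (Phi : 'M[F]_n.+1) (Psi : 'M[F]_(n.+1, m)) :
  (exists D, ctrb_mx Phi Psi *m D = 1%:M) -> disc_controllable Phi Psi.
Proof.
move=> [D hD] x0.
pose v := D *m (- (Phi ^+ n.+1 *m x0)).
have hv : ctrb_mx Phi Psi *m v = - (Phi ^+ n.+1 *m x0) by rewrite mulmxA hD mul1mx.
exists n.+1, (fun j => submxcol v (inord (n - j))).
rewrite traj_formula /=.
rewrite -[v in LHS]submxcolK /ctrb_mx mul_mxrow_mxcol in hv.
have -> : \sum_(j < n.+1) Phi ^+ j *m Psi *m submxcol v (inord (n - (n - j))) =
          \sum_(j < n.+1) Phi ^+ j *m Psi *m submxcol v j.
  apply: eq_bigr => j _; congr (_ *m submxcol v _).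
  by apply: val_inj; rewrite /= subKn ?inordK // -ltnS.
by rewrite hv addrN.
Qed.

Theorem corollary9 (R : realType) (N : nat) (a b c h : R) (W : 'M[R]_N)
  (delta : 'I_N -> bool) :
  (0 < N)%N -> a != 0 -> (forall i, W i i = 0) -> 0 < h ->
  cont_controllable (a%:M + c *: W) (b *: Delta_mx (R := R) delta) ->
  disc_controllable
    ((expR (a * h))%:M + (c / a * (expR (a * h) - 1)) *: W)
    ((b / a * (expR (a * h) - 1)) *: Delta_mx (R := R) delta).
Proof.
move=> N0 a0 _ h0 hc.
case: N W delta hc N0 => // n W delta hc _.
set e := expR (a * h).
set k := (e - 1) / a.
have e1 : e - 1 != 0.
  rewrite subr_eq0; apply/eqP => he.
  have : a * h = 0 by apply: expR_inj; rewrite expR0.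
  by apply/eqP; rewrite mulf_neq0 // lt0r_neq0.
have k0 : k != 0 by rewrite mulf_neq0 // invr_eq0.
have ePhi : e%:M + (c / a * (e - 1)) *: W = 1%:M + k *: (a%:M + c *: W).
  apply/matrixP => i j; rewrite !mxE; case: (i == j); rewrite /= ?mulr1n ?mulr0n /k;
    by field.
have ePsi : (b / a * (e - 1)) *: Delta_mx (R := R) delta
            = k *: (b *: Delta_mx (R := R) delta).
  by rewrite scalerA; congr (_ *: _); rewrite /k; field.
rewrite ePhi ePsi; apply: disc_of_rowfree.
have [T hT] := ctrb_sub (a%:M + c *: W) (b *: Delta_mx (R := R) delta) k0.
have /row_freeP [D hD] : row_free (ctrb_mx (a%:M + c *: W) (b *: Delta_mx (R := R) delta)).
  by rewrite /row_free; apply/eqP; exact: hc.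
exists (T *m D); rewrite mulmxA -hT; exact: hD.
Qed.
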